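(* Let $E$ be a real affine space of dimension $n$, let $\mu\in\mathcal M(E)$ and let $K$ be a convex subset of $E$ satisfying $\mu(E\setminus K)<2^{-n}\mu(E)$. Then every Yao-Yao center of $\mu$ belongs to $K$.
   Context: $\vec E$ denotes the vector space associated with $E$. A partition of $E$ is a collection $\mathcal P$ of subsets of $E$ with $\bigcup\mathcal P=E$ such that the interiors of any two distinct elements of $\mathcal P$ are disjoint. Yao-Yao partitions and their centers are defined by induction on the dimension: if $E=\{x\}$ has dimension $0$, the Yao-Yao partition of $E$ is $\{\{x\}\}$, with center $x$. If $\dim E=n\ge 1$, $\mathcal P$ is a Yao-Yao partition of $E$ with center $x$ if there exist an affine hyperplane $F$ of $E$, a vector $v\in\vec E\setminus\vec F$ and two Yao-Yao partitions $\mathcal P_1,\mathcal P_{-1}$ of $F$ having the same center $x$, such that $\mathcal P=\{A+\mathbb R_- v : A\in\mathcal P_{-1}\}\cup\{A+\mathbb R_+ v: A\in\mathcal P_1\}$. $\mathcal M(E)$ is the set of finite non-negative Borel measures $\mu$ on $E$ such that $\mu(H)=0$ for every affine hyperplane $H$ of $E$. For $\mu\in\mathcal M(E)$, a Yao-Yao equipartition for $\mu$ is a Yao-Yao partition $\mathcal P$ of $E$ with $\mu(A)=2^{-n}\mu(E)$ for all $A\in\mathcal P$; a point $x\in E$ is a Yao-Yao center of $\mu$ if it is the center of some Yao-Yao equipartition for $\mu$. *)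

(* Defs.v *)
From HB Require Import structures.
From mathcomp Require Import all_boot all_order all_algebra.
From mathcomp Require Import all_classical all_reals all_analysis.
Set Implicit Arguments. Unset Strict Implicit. Unset Printing Implicit Defensive.
Import Order.TTheory GRing.Theory Num.Theory numFieldNormedType.Exports.
Local Open Scope classical_set_scope.
Local Open Scope ring_scope.

Section YaoYao.
Variables (R : realType) (n : nat).

(* The real affine space E of dimension n, modelled as R^n = 'rV[R]_n. *)
Notation E := 'rV[R]_n.

Definition aff (a : E) (W : {vspace E}) : set E := [set x | (x - a) \in W].

Definition aff_hyperplane_of (F G : set E) (v : E) : Prop :=
  exists (a : E) (V W : {vspace E}),
    [/\ F = aff a V, G = aff a W, (W <= V)%VS, (\dim W).+1 = \dim V
      & v \in V /\ v \notin W].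

Definition add_neg_ray (A : set E) (v : E) : set E :=
  [set y + t *: v | y in A & t in [set t : R | t <= 0]].
Definition add_pos_ray (A : set E) (v : E) : set E :=
  [set y + t *: v | y in A & t in [set t : R | 0 <= t]].

(* yao_yao F P x : P is a Yao-Yao partition of the affine subspace F of E,
   with center x (defined by induction on the dimension of F). *)
Inductive yao_yao : set E -> set (set E) -> E -> Prop :=
| yao_yao0 (x : E) : yao_yao [set x] [set [set x]] x
| yao_yaoS (F G : set E) (v : E) (P1 Pm1 : set (set E)) (x : E) :
    aff_hyperplane_of F G v ->
    yao_yao G P1 x -> yao_yao G Pm1 x ->
    yao_yao F ([set add_neg_ray A v | A in Pm1] `|`
               [set add_pos_ray A v | A in P1]) x.

Definition borelE : Type := g_sigma_algebraType (@open E).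

Definition affine_hyperplane (H : set E) : Prop :=
  exists (a : E) (W : {vspace E}), (\dim W).+1 = n /\ H = aff a W.

Definition in_M (mu : {measure set borelE -> \bar R}) : Prop :=
  (mu setT < +oo)%E /\ forall H : set E, affine_hyperplane H -> mu H = 0%E.

Definition yao_yao_equipartition (mu : {measure set borelE -> \bar R})
    (P : set (set E)) (x : E) : Prop :=
  yao_yao setT P x /\ forall A, P A -> mu A = ((2 ^- n : R)%:E * mu setT)%E.

Definition yao_yao_center (mu : {measure set borelE -> \bar R}) (x : E) : Prop :=
  exists P, yao_yao_equipartition mu P x.

End YaoYao.

(* Main.v *)
Require Import Defs.
From HB Require Import structures.
From mathcomp Require Import all_boot all_order all_algebra.
From mathcomp Require Import all_classical all_reals all_analysis.
From mathcomp Require Import ring lra.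
Import Order.TTheory GRing.Theory Num.Theory numFieldNormedType.Exports.
Local Open Scope classical_set_scope.
Local Open Scope ring_scope.

Section Geo.
Variables (R : realType) (n : nat).
Notation E := 'rV[R]_n.

Definition cvx (K : set E) := forall a b (t : R), 0 <= t -> t <= 1 ->
  K a -> K b -> K (t *: a + (1 - t) *: b).

Lemma convex_cvx (K : set 'rV[R]_n) :
  convex_set (K : set (convex_lmodType 'rV[R]_n)) -> cvx K.
Proof.
move=> cK a b t t0 t1 Ka Kb.
have := cK a b (Itv01 t0 t1).
rewrite !inE => /(_ Ka Kb).
by [].
Qed.

Lemma sep F P (x : E) : yao_yao F P x -> forall K : set E, cvx K -> ~ K x ->
  exists A, P A /\ (forall y, A y -> ~ K y).
Proof.
move=> H; elim: H => {F P x} [x|F G v P1 Pm1 x _ _ IH1 _ IHm1] K cK Kx.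
  by exists [set x]; split => // y ->.
pose Kp := [set y | exists2 t, 0 <= t & K (y + t *: v)].
pose Km := [set y | exists2 t, t <= 0 & K (y + t *: v)].
have comb : forall y1 y2 t1 t2 l, 
   l *: (y1 + t1 *: v) + (1 - l) *: (y2 + t2 *: v) =
   (l *: y1 + (1 - l) *: y2) + (l * t1 + (1 - l) * t2) *: v.
  move=> y1 y2 t1 t2 l; rewrite !scalerDr !scalerA addrACA -scalerDl.
  by [].
have [Kpx|Kmx] : ~ Kp x \/ ~ Km x.
  apply/not_andP => -[[t t0 Kt] [s s0 Ks]].
  have [ts|ts] := eqVneq t s.
    have s00 : s = 0 by apply/eqP; rewrite eq_le s0 -ts t0.
    by apply: Kx; move: Kt; rewrite ts s00 scale0r addr0.
  have tsp : 0 < t - s by rewrite subr_gt0 lt_neqAle eq_sym ts (le_trans s0 t0).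
  pose l := - s / (t - s).
  have l0 : 0 <= l by rewrite divr_ge0 ?oppr_ge0 // ltW.
  have l1 : l <= 1 by rewrite ler_pdivrMr // mul1r; lra.
  have := cK _ _ _ l0 l1 Kt Ks; rewrite comb.
  have -> : l * t + (1 - l) * s = 0.
    rewrite /l; field; by rewrite gt_eqF.
  by rewrite scale0r addr0 -scalerDl addrC subrK scale1r.
- have cKp : cvx Kp.
    move=> a b l l0 l1 [t1 t10 K1] [t2 t20 K2].
    exists (l * t1 + (1 - l) * t2); first by rewrite addr_ge0 // mulr_ge0 // subr_ge0.
    by rewrite -comb; apply: cK.
  have [A [PA HA]] := IH1 Kp cKp Kpx.
  exists (add_pos_ray A v); split; first by right; exists A.
  move=> _ [a Aa [t /= t0 <-]] Ky; apply: (HA a Aa); by exists t.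
- have cKm : cvx Km.
    move=> a b l l0 l1 [t1 t10 K1] [t2 t20 K2].
    exists (l * t1 + (1 - l) * t2).
      by rewrite -oppr_ge0 opprD addr_ge0 // -mulrN mulr_ge0 // ?subr_ge0 ?oppr_ge0.
    by rewrite -comb; apply: cK.
  have [A [PA HA]] := IHm1 Km cKm Kmx.
  exists (add_neg_ray A v); split; first by left; exists A.
  move=> _ [a Aa [t /= t0 <-]] Ky; apply: (HA a Aa); by exists t.
Qed.
End Geo.

Section Top.
Variables (R : realType) (n : nat).
Notation E := 'rV[R]_n.

Lemma cont_sum (I : Type) (s : seq I) (F : I -> E -> R) :
  (forall i, continuous (F i)) -> continuous (fun y => \sum_(i <- s) F i y).
Proof.
move=> cF; elim: s => [|i s IH].
  under eq_fun do rewrite big_nil.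
  exact: cst_continuous.
under eq_fun do rewrite big_cons.
move=> y; exact: (cvgD (cF i y) (IH y)).
Qed.

Lemma coord_cont k (Y : k.-tuple E) i : continuous (coord Y i).
Proof.
have eq : coord Y i = (fun y : E => \sum_(j < n) y 0 j * coord Y i (delta_mx 0 j)).
  apply/funext => y; rewrite {1}(row_sum_delta y) linear_sum.
  by apply: eq_bigr => j _; rewrite linearZ.
rewrite eq; apply: cont_sum => j y.
have h1 := @coord_continuous R 1 n 0 j y.
exact: (cvgM h1 (cvg_cst (coord Y i (delta_mx 0 j)))).
Qed.


Lemma phi_ex (W : {vspace E}) (v : E) : v \notin W ->
  exists Y : (\dim W).+1.-tuple E,
   [/\ coord Y ord0 v = 1 & forall w, w \in W -> coord Y ord0 w = 0].
Proof.
move=> vW.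
pose Y := [tuple of v :: vbasis W].
have fY : free Y.
  rewrite /= free_cons (span_basis (vbasisP W)) vW /=.
  exact: basis_free (vbasisP W).
exists Y; split.
  by have := coord_free ord0 ord0 fY.
move=> w wW; rewrite (coord_vbasis wW) linear_sum big1 // => i _.
rewrite linearZ /=.
have := coord_free (lift ord0 i) ord0 fY.
rewrite /= => ->; by rewrite mulr0.
Qed.

Lemma closed_meas (A : set E) : closed A -> measurable (A : set (borelE R n)).
Proof.
move=> cA.
have h : measurable (~` A : set (borelE R n)).
  by apply: sub_sigma_algebra; rewrite openC.
by rewrite -[A]setCK; exact: measurableC.
Qed.

Lemma ray_closed (W : {vspace E}) (v x : E) (A : set E) : v \notin W ->
  closed A -> (forall a, A a -> a - x \in W) ->
  closed (add_pos_ray A v) /\ closed (add_neg_ray A v).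
Proof.
move=> vW cA AW.
have [Y [Yv YW]] := @phi_ex W v vW.
pose phi := coord Y ord0.
pose psi y := phi y - phi x.
have cpsi : continuous psi.
  by move=> y; exact: (cvgB (coord_cont _ Y ord0 y) (cvg_cst (phi x))).
pose g y := y - psi y *: v.
have cg : continuous g.
  move=> y; exact: (cvgB cvg_id (cvgZ (cpsi y) (cvg_cst v))).
have key : forall a t, A a -> psi (a + t *: v) = t /\ g (a + t *: v) = a.
  move=> a t Aa.
  have pa : psi (a + t *: v) = t.
    rewrite /psi /phi linearD linearZ /= Yv.
    have := YW _ (AW a Aa); rewrite linearB /= => /eqP; rewrite subr_eq0 => /eqP ->.
    by rewrite mulr1 addrAC subrr add0r.
  by split => //; rewrite /g pa addrK.
have back : forall y, y = g y + psi y *: v by move=> y; rewrite /g subrK.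
have cp : closed (psi @^-1` [set r | 0 <= r]).
  by apply: preimage_closed; [move=> z _; exact: cpsi | exact: closed_ge].
have cm : closed (psi @^-1` [set r | r <= 0]).
  by apply: preimage_closed; [move=> z _; exact: cpsi | exact: closed_le].
have cgA : closed (g @^-1` A).
  by apply: preimage_closed; [move=> z _; exact: cg | exact: cA].
split.
- have -> : add_pos_ray A v = psi @^-1` [set r | 0 <= r] `&` g @^-1` A.
    apply/seteqP; split.
      move=> _ [a Aa [t /= t0 <-]]; have [-> ->] := key a t Aa; by split.
    move=> y [/= y0 gy]; exists (g y) => //; exists (psi y) => //; by rewrite -back.
  exact: closedI.
- have -> : add_neg_ray A v = psi @^-1` [set r | r <= 0] `&` g @^-1` A.
    apply/seteqP; split.
      move=> _ [a Aa [t /= t0 <-]]; have [-> ->] := key a t Aa; by split.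
    move=> y [/= y0 gy]; exists (g y) => //; exists (psi y) => //; by rewrite -back.
  exact: closedI.
Qed.


Lemma inv F P (x : E) : yao_yao F P x ->
  F x /\ forall A, P A -> closed A /\ A `<=` F.
Proof.
move=> H; elim: H => {F P x} [x|F G v P1 Pm1 x hyp _ [Gx IH1] _ [_ IHm1]].
  split => // A ->; split => //.
  exact: (accessible_closed_set1 (hausdorff_accessible (@norm_hausdorff _ _))).
have [a [V [W [FE GE WV _ [vV vW]]]]] := hyp.
subst F G.
move: Gx; rewrite /aff /= => xa.
have AW : forall A, A `<=` aff a W -> forall y, A y -> y - x \in W.
  move=> A AG y /AG; rewrite /aff /= => ya.
  have -> : y - x = (y - a) - (x - a) by rewrite opprB addrA subrK.
  exact: memvB.
split; first exact: (subvP WV).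
have sub : forall y (t : R), y - a \in W -> y + t *: v - a \in V.
  move=> y t ya; rewrite addrAC; apply: memvD; first exact: (subvP WV).
  exact: memvZ.
move=> _ [[A PA <-]|[A PA <-]].
- have [cA AG] := IHm1 A PA; split.
    by have [_ ] := @ray_closed W v x A vW cA (AW A AG).
  by move=> _ [y Ay [t _ <-]]; apply: sub; exact: AG.
- have [cA AG] := IH1 A PA; split.
    by have [] := @ray_closed W v x A vW cA (AW A AG).
  by move=> _ [y Ay [t _ <-]]; apply: sub; exact: AG.
Qed.

End Top.

Theorem proposition5 (R : realType) (n : nat)
    (mu : {measure set (borelE R n) -> \bar R}) (K : set 'rV[R]_n) :
  in_M mu ->
  convex_set (K : set (convex_lmodType 'rV[R]_n)) ->
  measurable (K : set (borelE R n)) ->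
  (mu (~` K) < (2 ^- n : R)%:E * mu setT)%E ->
  forall x : 'rV[R]_n, yao_yao_center mu x -> K x.
Proof.
move=> _ cK mK ltK x [P [yyP eqA]].
apply: contrapT => Kx.
have [A [PA HA]] := @sep R n _ _ _ yyP K (@convex_cvx R n K cK) Kx.
have [cA _] := (@inv R n _ _ _ yyP).2 A PA.
have mA := @closed_meas R n A cA.
have hle : (mu A <= mu (~` K))%E.
  apply: le_measure; rewrite ?inE //; exact: measurableC.
rewrite -(eqA A PA) in ltK.
by have := lt_le_trans ltK hle; rewrite ltxx.
Qed.
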